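(* Let $M(A)$ be an RBK manifold with Bott matrix $A$ and $P$-matrix $P$. Suppose $k$ is an even number and there are indices $i_1<\dots<i_{2k}$ such that the columns $A^{i_1}=A^{i_2}=\dots=A^{i_{2k}}$ are equal and nonzero, while all other columns of $A$ are zero. Then $w_2(M(A))=0$, so $M(A)$ has a Spin-structure.
   Context: Real Bott manifolds: let $A=[a_{ij}]$ be an $m\times m$ strictly upper triangular matrix with entries in $\{0,1\}$. For $i=1,\dots,m-1$ let $s_i$ be the Euclidean motion of $\mathbb R^m$ given by $s_i=(\mathrm{diag}[1,\dots,1,(-1)^{a_{i,i+1}},\dots,(-1)^{a_{i,m}}],\ \tfrac12 e_i)$, and $s_m=(I,\tfrac12 e_m)$. $\Gamma(A)=\langle s_1,\dots,s_m\rangle$ is a torsion-free crystallographic group with extension $0\to\mathbb Z^m\to\Gamma(A)\xrightarrow{\pi}\mathbb Z_2^m\to1$, and $M(A)=\mathbb R^m/\Gamma(A)$. Identify $H^*(\mathbb Z_2^m;\mathbb F_2)=\mathbb F_2[x_1,\dots,x_m]$ ($x_i$ dual to the image of $s_i$). The $P$-matrix $P=[p_{ij}]$ has $p_{ii}=1$, $p_{ij}=2$ if $i<j$ and $a_{ij}=1$, and $p_{ij}=0$ otherwise; with $\alpha(0)=0,\alpha(1)=\alpha(2)=1,\alpha(3)=0$, $\beta(0)=\beta(2)=0,\beta(1)=\beta(3)=1$, set $\alpha_j=\sum_i\alpha(p_{ij})x_i$, $\beta_j=\sum_i\beta(p_{ij})x_i$ (so $\alpha_j+\beta_j=\sum_{i<j}a_{ij}x_i$).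 The total Stiefel–Whitney class is $w(M(A))=\pi^*\big(\prod_{j=1}^m(1+\alpha_j+\beta_j)\big)$. An RBK manifold is $M(A)$ with $m=2n$ for which $\{1,\dots,2n\}$ can be partitioned into $n$ pairs $\{j_k,j_{k+n}\}$ with equal columns $A^{j_k}=A^{j_{k+n}}$ ($A^j$ = $j$-th column of $A$). $M(A)$ has a Spin-structure iff $w_2(M(A))=0$. *)

(* Defs.v *)
From HB Require Import structures.
From mathcomp Require Import all_boot all_order all_algebra all_fingroup.
Set Implicit Arguments. Unset Strict Implicit. Unset Printing Implicit Defensive.
Import GRing.Theory.
Local Open Scope ring_scope.

Definition strictly_upper (m : nat) (A : 'M['F_2]_m) : Prop :=
  forall i j : 'I_m, (j <= i)%N -> A i j = 0.

(* RBK manifold: m = n + n and the indices can be partitioned into n pairs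
   {j_k, j_(k+n)} with equal columns; the enumeration j is a permutation s. *)
Definition RBK (n : nat) (A : 'M['F_2]_(n + n)) : Prop :=
  strictly_upper A /\
  exists s : 'S_(n + n),
    forall k : 'I_n, col (s (lshift n k)) A = col (s (rshift n k)) A.

Definition Pmat (m : nat) (A : 'M['F_2]_m) (i j : 'I_m) : nat :=
  if i == j then 1%N else if (i < j)%N && (A i j == 1) then 2%N else 0%N.

Definition alphaF (p : nat) : 'F_2 :=
  match p with 1 | 2 => 1 | _ => 0 end.
Definition betaF (p : nat) : 'F_2 :=
  match p with 1 | 3 => 1 | _ => 0 end.

(* Linear forms in F_2[x_1..x_m] are represented by their coefficient rows:
   l represents sum_i l_i x_i. *)
Definition alpha_j (m : nat) (A : 'M['F_2]_m) (j : 'I_m) : 'rV['F_2]_m :=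
  \row_i alphaF (Pmat A i j).
Definition beta_j (m : nat) (A : 'M['F_2]_m) (j : 'I_m) : 'rV['F_2]_m :=
  \row_i betaF (Pmat A i j).

(* Homogeneous quadratic polynomials in F_2[x_1..x_m] are represented by
   coefficient matrices Q with Q i i' = coefficient of x_i x_i' for i <= i'
   and Q i i' = 0 for i > i'.  qmul l l' is the product of two linear forms. *)
Definition qmul (m : nat) (l l' : 'rV['F_2]_m) : 'M['F_2]_m :=
  \matrix_(i, i')
    if i == i' then l 0 i * l' 0 i
    else if (i < i')%N then l 0 i * l' 0 i' + l 0 i' * l' 0 i
    else 0.

(* Degree-2 homogeneous component of prod_j (1 + alpha_j + beta_j)
   = sum_{j < j'} (alpha_j + beta_j)(alpha_j' + beta_j'); its image under
   pi^* is w_2(M(A)). *)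
Definition w2poly (m : nat) (A : 'M['F_2]_m) : 'M['F_2]_m :=
  \sum_(j : 'I_m) \sum_(j' : 'I_m | (j < j')%N)
     qmul (alpha_j A j + beta_j A j) (alpha_j A j' + beta_j A j').

(* Main.v *)
From HB Require Import structures.
From mathcomp Require Import all_boot all_order all_algebra all_fingroup.
From mathcomp Require Import zify.
Require Import Defs.
Import GRing.Theory.
Local Open Scope ring_scope.

Lemma pairs_count m (g : 'I_m -> bool) :
  ((\sum_(j < m) \sum_(j' < m | (j < j')%N) ((g j && g j') : nat)).*2
   + \sum_(j < m) (g j : nat) = (\sum_(j < m) (g j : nat)) * (\sum_(j < m) (g j : nat)))%N.
Proof.
rewrite big_distrl /=.
have E : forall j : 'I_m, ((g j : nat) * \sum_(j' < m) (g j' : nat) =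
   \sum_(j' < m | (j < j')%N) ((g j && g j') : nat) +
   \sum_(j' < m | (j' < j)%N) ((g j && g j') : nat) + g j)%N.
  move=> j; rewrite big_distrr /= (bigID (fun j' : 'I_m => (j < j')%N)) /= -addnA.
  congr (_ + _)%N; first by apply: eq_bigr => j' _; case: (g j); case: (g j').
  rewrite (bigID (fun j' : 'I_m => (j' < j)%N)) /=.
  congr (_ + _)%N.
    by apply: eq_big => [j'|j' _]; [case: ltngtP | case: (g j); case: (g j')].
  rewrite (big_pred1 j); first by case: (g j).
  move=> j' /=; rewrite -(inj_eq val_inj) /=; case: ltngtP => //.
rewrite (eq_bigr _ (fun j _ => E j)) !big_split /= -addnn -!addnA; congr (_ + (_ + _))%N.
rewrite (exchange_big_dep xpredT) //=.
apply: eq_bigr => j _; apply: eq_bigr => j' _; by rewrite andbC.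
Qed.

Lemma F2cases (x : 'F_2) : x = 0 \/ x = 1.
Proof. case: x => [[|[|n]]] Hn; [left|right|by []]; exact: val_inj. Qed.

Lemma F2add (x : 'F_2) : x + x = 0.
Proof. have [->|->] := F2cases x. by rewrite addr0. apply: val_inj. reflexivity. Qed.

Lemma ab_row m (A : 'M['F_2]_m) j : strictly_upper A ->
  alpha_j A j + beta_j A j = \row_i A i j.
Proof.
move=> su; apply/matrixP=> x i; rewrite !mxE /Pmat.
case: eqP => [->|/eqP ne].
  by rewrite su //; apply: val_inj.
case: ifP => [/andP [_ /eqP ->]|H]; first by rewrite addr0.
case: (ltnP i j) H => [lt|le] H.
  by have [->|E] := F2cases (A i j); [rewrite addr0 | rewrite E eqxx in H].
by rewrite su // addr0.
Qed.

Lemma qmul0l m (l : 'rV['F_2]_m) : qmul 0 l = 0.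
Proof. apply/matrixP=> i j; rewrite !mxE; case: ifP => _; rewrite ?mul0r //; case: ifP => _; by rewrite ?mul0r ?mulr0 ?addr0. Qed.

Lemma qmul0r m (l : 'rV['F_2]_m) : qmul l 0 = 0.
Proof. apply/matrixP=> i j; rewrite !mxE; case: ifP => _; rewrite ?mulr0 //; case: ifP => _; by rewrite ?mul0r ?mulr0 ?addr0. Qed.

Theorem lemma3p2 (n : nat) (A : 'M['F_2]_(n + n)) (k : nat)
    (I : 'I_(k.*2) -> 'I_(n + n)) :
  RBK A ->
  ~~ odd k -> (0 < k)%N ->
  (forall t t' : 'I_(k.*2), (t < t')%N -> (I t < I t')%N) ->
  (forall t t' : 'I_(k.*2), col (I t) A = col (I t') A) ->
  (forall t : 'I_(k.*2), col (I t) A != 0) ->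
  (forall j : 'I_(n + n), (forall t : 'I_(k.*2), j != I t) -> col j A = 0) ->
  w2poly A = 0.
Proof.
move=> [su _] kev kpos mono eqc nz zero.
have k2pos : (0 < k.*2)%N by rewrite double_gt0.
pose t0 : 'I_(k.*2) := Ordinal k2pos.
pose c : 'rV['F_2]_(n + n) := \row_i A i (I t0).
pose g := fun j : 'I_(n + n) => j \in codom I.
have Hv : forall j, alpha_j A j + beta_j A j = if g j then c else 0.
  move=> j; rewrite ab_row //; rewrite /g; case: codomP => [[t ->]|ng].
    apply/matrixP => x i; rewrite !mxE.
    by have := congr1 (fun M : 'cV_(n + n) => M i x) (eqc t t0); rewrite !mxE.
  have cz : col j A = 0.
    by apply: zero => t; apply/eqP => E; apply: ng; exists t.
  apply/matrixP => x i; rewrite !mxE.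
  by have := congr1 (fun M : 'cV_(n + n) => M i x) cz; rewrite !mxE.
pose Q := qmul c c.
have -> : w2poly A = Q *+ (\sum_(j < n + n) \sum_(j' < n + n | (j < j')%N) ((g j && g j') : nat))%N.
  rewrite /w2poly -sumrMnr; apply: eq_bigr => j _; rewrite -sumrMnr.
  apply: eq_bigr => j' _; rewrite !Hv.
  by case: (g j); case: (g j'); rewrite ?qmul0l ?qmul0r.
have inj : injective I.
  move=> t t' E; apply/val_inj; case: (ltngtP t t') => [/mono|/mono|//]; by rewrite E ltnn.
have HN : (\sum_(j < n + n) (g j : nat) = k.*2)%N.
  rewrite -[RHS]card_ord -(card_codom inj) -sum1_card [RHS]big_mkcond.
  by apply: eq_bigr => j _; rewrite /g; case: (_ \in _).
have := pairs_count _ g; rewrite HN.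
set S := (\sum_(j < _) _)%N => HS.
have Sev : (S %% 2 = 0)%N.
  move: HS; rewrite -(even_halfK kev); set h := k./2 => HS. nia.
rewrite -(divnK (_ : (2 %| S)%N)); last by rewrite /dvdn Sev.
rewrite mulrnA mulr2n; apply/matrixP => i j; by rewrite !mxE F2add.
Qed.
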